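(* Let $(X,d)$ be a bounded metric space and $\lambda\ge0$. Let $\ell,\ell_n:X\to[0,+\infty)$ ($n\in\mathbb{N}$) be lower semicontinuous with $\inf_X\ell=\inf_X\ell_n=0$, and assume $\ell$ is bounded. Let $u$ and $u_n$ be the Perron solutions of $(\mathcal{G}_\lambda)$ associated with $\ell$ and $\ell_n$, respectively. If $\ell_n\to\ell$ uniformly, then $u_n\to u$ uniformly.
   Context: Global slope: $G[u](x)=\sup_{y\neq x}\frac{(u(x)-u(y))_+}{d(x,y)}$ if $u(x)<+\infty$, $G[u](x)=+\infty$ otherwise. A solution of $(\mathcal{G}_\lambda)$ with data $\ell$ is a lower semicontinuous $u$ with $\inf_Xu=0$ and $\lambda u+G[u]=\ell$ on $X$; the Perron solution is the solution that is pointwise maximal among all solutions. *)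

(* Defs.v *)
From HB Require Import structures.
From mathcomp Require Import all_boot all_order all_algebra.
From mathcomp Require Import all_classical all_reals ereal.
Set Implicit Arguments. Unset Strict Implicit. Unset Printing Implicit Defensive.
Import Order.TTheory GRing.Theory Num.Theory.
Local Open Scope classical_set_scope.
Local Open Scope ring_scope.

Section Defs.
Variables (R : realType) (X : Type) (d : X -> X -> R).

Definition is_metric : Prop :=
  (forall x y, 0 <= d x y) /\ (forall x y, d x y = 0 <-> x = y) /\
  (forall x y, d x y = d y x) /\ (forall x y z, d x z <= d x y + d y z).

Definition bounded_metric : Prop := exists M : R, forall x y, d x y <= M.

Definition lsc_real (f : X -> R) : Prop :=
  forall x (t : R), t < f x ->
    exists2 del : R, 0 < del & forall y, d x y < del -> t < f y.

Definition lsc_ext (f : X -> \bar R) : Prop :=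
  forall x (t : R), (t%:E < f x)%E ->
    exists2 del : R, 0 < del & forall y, d x y < del -> (t%:E < f y)%E.

(* The supremum is taken together with 0 (harmless since the quotients are
   nonnegative; fixes the convention sup(empty) = 0 for a one-point space). *)
Definition gslope (u : X -> \bar R) (x : X) : \bar R :=
  if u x == +oo%E then +oo%E
  else ereal_sup ([set 0%E] `|`
         [set (maxe (u x - u y) 0 * ((d x y)^-1)%:E)%E | y in [set y | y <> x]]).

Definition is_solution (lam : R) (l : X -> R) (u : X -> \bar R) : Prop :=
  lsc_ext u /\ ereal_inf (range u) = 0%E /\
  forall x, (lam%:E * u x + gslope u x)%E = (l x)%:E.

Definition is_perron (lam : R) (l : X -> R) (u : X -> \bar R) : Prop :=
  is_solution lam l u /\
  forall v, is_solution lam l v -> forall x, (v x <= u x)%E.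

End Defs.

Definition unif_conv_real (R : realType) (X : Type) (f : nat -> X -> R) (g : X -> R) :=
  forall e : R, 0 < e -> exists N : nat, forall n, (N <= n)%N -> forall x, `|f n x - g x| < e.

Definition unif_conv_ext (R : realType) (X : Type) (f : nat -> X -> \bar R) (g : X -> \bar R) :=
  forall e : R, 0 < e -> exists N : nat, forall n, (N <= n)%N -> forall x,
    (`|f n x - g x| < e%:E)%E.

(* Main.v *)
Require Import Defs.
From HB Require Import structures.
From mathcomp Require Import all_boot all_order all_algebra.
From mathcomp Require Import all_classical all_reals ereal.
From mathcomp Require Import ring lra.
Import Order.TTheory GRing.Theory Num.Theory.
Local Open Scope classical_set_scope.
Local Open Scope ring_scope.
Set Implicit Arguments. Unset Strict Implicit. Unset Printing Implicit Defensive.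

Lemma gap_le (R : realType) (a b c : R) :
  0 <= c -> (forall e, 0 < e -> a <= b + c * e) -> a <= b.
Proof.
move=> c0 H; apply/ler_addgt0Pr => e e0.
have c1 : 0 < c + 1 by lra.
apply: (le_trans (H (e / (c + 1)) _)); first by rewrite divr_gt0.
rewrite lerD2l mulrA ler_pdivrMr //; nra.
Qed.

Section Main.
Variables (R : realType) (X : Type) (d : X -> X -> R) (lam : R).
Hypothesis hd : is_metric d.
Hypothesis hlam : 0 <= lam.
Variable D : R.
Hypothesis D_gt0 : 0 < D.
Hypothesis hD : forall x y, d x y <= D.

Lemma d_ge0 x y : 0 <= d x y. Proof. by case: hd. Qed.
Lemma d_xx x : d x x = 0. Proof. by case: hd => _ [H _]; apply/H. Qed.
Lemma d_sym x y : d x y = d y x. Proof. by case: hd => _ [_ [H _]]. Qed.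
Lemma d_tri x y z : d x z <= d x y + d y z. Proof. by case: hd => _ [_ [_ H]]. Qed.

Definition sub (l : X -> R) (v : X -> R) : Prop :=
  lsc_real d v /\ (forall x, 0 <= v x) /\ (forall x, lam * v x <= l x) /\
  (forall x y, v x - v y <= (l x - lam * v x) * d x y) /\
  (forall e, 0 < e -> exists x, v x < e).

Lemma sub_bound l v : sub l v -> forall x, v x <= l x * D.
Proof.
move=> [_ [v0 [vl [vs vi]]]] x; apply/ler_addgt0Pr => e e0.
have [y vy] := vi e e0.
have := vs x y; have := d_ge0 x y; have := hD x y; have := v0 x; have := vl x.
have := v0 y; have := mulr_ge0 hlam (v0 x).
nra.
Qed.


Lemma gslopeE (v : X -> R) x : gslope d (fun y => (v y)%:E) x =
  ereal_sup ([set 0%E] `|` [set (Num.max (v x - v y) 0 / d x y)%:E | y in [set y | y <> x]]).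
Proof.
rewrite /gslope /=; congr (ereal_sup (_ `|` _)).
apply/seteqP; split=> _ [y hy <-]; exists y => //.
  by rewrite EFinM EFin_max.
by rewrite EFinM EFin_max.
Qed.

Lemma d_gt0 x y : y <> x -> 0 < d x y.
Proof.
move=> yx; rewrite lt_neqAle d_ge0 andbT; apply/eqP => h.
by case: hd => _ [H _]; apply: yx; symmetry; apply/H.
Qed.

Lemma sol_sub l (v : X -> R) : is_solution d lam l (fun x => (v x)%:E) -> sub l v.
Proof.
move=> [ulsc [uinf ueq]].
have v0 x : 0 <= v x.
  have := ereal_inf_lbound (S := range (fun x => (v x)%:E)) (ex_intro2 _ _ x I erefl).
  by rewrite uinf lee_fin.
have gs x : gslope d (fun y => (v y)%:E) x = (l x - lam * v x)%:E /\ 0 <= l x - lam * v x.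
  have := ueq x; have : (0 <= gslope d (fun y => (v y)%:E) x)%E.
    by rewrite gslopeE; apply: ereal_sup_ubound; left.
  case: (gslope _ _ x) => [r| |] //.
  rewrite lee_fin -EFinM -EFinD => r0 [<-]; have -> : lam * v x + r - lam * v x = r by ring. by [].
split.
  move=> x t tx; have [del del0 H] := ulsc x t tx.
  by exists del => // y /H.
split => //; split.
  by move=> x; have [_ ] := gs x; rewrite subr_ge0.
split.
  move=> x y; case: (pselect (y = x)) => [->|yx].
    by rewrite d_xx subrr mulr0.
  have dp := d_gt0 yx.
  have [gE g0] := gs x.
  have : ((Num.max (v x - v y) 0 / d x y)%:E <= (l x - lam * v x)%:E)%E.
    by rewrite -gE gslopeE; apply: ereal_sup_ubound; right; exists y.
  rewrite lee_fin ler_pdivrMr // => h; apply: le_trans h.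
  by rewrite le_max lexx.
move=> e e0.
have : (ereal_inf (range (fun x => (v x)%:E)) < e%:E)%E by rewrite uinf lte_fin.
by move=> /ereal_inf_lt [_ [x _ <-]]; rewrite lte_fin => h; exists x.
Qed.

Lemma sol_fin l u : is_solution d lam l u -> u = (fun x => (fine (u x))%:E).
Proof.
move=> [_ [uinf ueq]]; apply: funext => x.
have u0 : (0 <= u x)%E.
  have := ereal_inf_lbound (S := range u) (ex_intro2 _ _ x I erefl).
  by rewrite uinf.
case E: (u x) u0 => [r| |] //= _.
have := ueq x; rewrite /gslope E eqxx addey //.
have : (0 <= lam%:E * +oo)%E by apply: mule_ge0; rewrite ?lee_fin ?leey.
by case: (_ * _)%E.
Qed.

Lemma super_sol l (v : X -> R) : sub l v ->
  (forall x k, 0 <= k -> (forall y, v x - v y <= k * d x y) -> l x - lam * v x <= k) ->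
  is_solution d lam l (fun x => (v x)%:E).
Proof.
move=> [vlsc [v0 [vl [vs vi]]]] Hsup.
split.
  move=> x t; rewrite lte_fin => tx; have [del del0 H] := vlsc x t tx.
  by exists del => // y /H.
split.
  apply/eqP; rewrite eq_le; apply/andP; split; last first.
    by apply: le_ereal_inf_tmp => _ [x _ <-]; rewrite lee_fin.
  rewrite leNgt; apply/negP => h.
  have [x1 _] := vi 1 ltr01.
  have lb y : (ereal_inf (range (fun x => (v x)%:E)) <= (v y)%:E)%E.
    exact: ereal_inf_lbound.
  move: h (lb x1); case: (ereal_inf _) (lb) => [r| |] //= lb'.
  rewrite lte_fin => r0 _; have [y vy] := vi r r0.
  by have := lb' y; rewrite lee_fin leNgt vy.
move=> x.
have key : gslope d (fun y => (v y)%:E) x = (l x - lam * v x)%:E.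
  rewrite gslopeE; apply/eqP; rewrite eq_le; apply/andP; split.
    apply: ge_ereal_sup => _ [->|[y yx <-]]; first by rewrite lee_fin subr_ge0.
    rewrite lee_fin; have dp := d_gt0 yx; rewrite ler_pdivrMr //.
    rewrite ge_max; apply/andP; split; first exact: vs.
    by apply: mulr_ge0; rewrite ?subr_ge0 // ltW.
  rewrite leNgt; apply/negP => h.
  have S0 : (0 <= ereal_sup ([set 0%E] `|` [set (Num.max (v x - v y) 0 / d x y)%:E | y in [set y | y <> x]]))%E.
    by apply: ereal_sup_ubound; left.
  move: h S0; case E: (ereal_sup _) => [k| |] //; rewrite !lee_fin lte_fin => h k0.
  suff : l x - lam * v x <= k by rewrite leNgt h.
  apply: Hsup => // y.
  case: (pselect (y = x)) => [->|yx]; first by rewrite d_xx subrr mulr0.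
  have dp := d_gt0 yx.
  have : ((Num.max (v x - v y) 0 / d x y)%:E <= k%:E)%E.
    by rewrite -E; apply: ereal_sup_ubound; right; exists y.
  rewrite lee_fin ler_pdivrMr // => h'; apply: le_trans h'.
  by rewrite le_max lexx.
rewrite key -EFinM -EFinD; have -> : lam * v x + (l x - lam * v x) = l x by ring.
by [].
Qed.

Lemma trunc l1 l2 v (del a eps : R) : sub l1 v -> (forall x, 0 <= l2 x) ->
  (forall x, l1 x - eps <= l2 x) -> 0 < del -> del < 1 -> 0 <= a ->
  eps * D <= del * a -> sub l2 (fun x => (1 - del) * Num.max (v x - a) 0).
Proof.
move=> sv l20 l12 del0 del1 a0 epsD.
have vb := sub_bound sv.
have [vlsc [v0 [vl [vs vi]]]] := sv.
have c0 : 0 < 1 - del by rewrite subr_gt0.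
have w0 y : 0 <= (1 - del) * Num.max (v y - a) 0.
  by apply: mulr_ge0; [exact: ltW | rewrite le_max lexx orbT].
have wlow y : (1 - del) * (v y - a) <= (1 - del) * Num.max (v y - a) 0.
  by rewrite ler_pM2l // le_max lexx.
split.
  move=> x t /=; case: (lerP (v x - a) 0) => h.
    rewrite mulr0 => t0; exists 1 => // y _.
    exact: lt_le_trans t0 (w0 y).
  rewrite -ltr_pdivrMl // => tv.
  have tv' : t / (1 - del) + a < v x by rewrite -ltrBrDr; rewrite mulrC.
  have [r r0 H] := vlsc x _ tv'; exists r => // y /H hy.
  apply: lt_le_trans (wlow y); rewrite -ltr_pdivrMl // mulrC.
  by rewrite ltrBrDr.
split => //.
have key x : a < v x -> (1 - del) * l1 x <= l1 x - eps.
  move=> h; have := vb x; have : eps <= del * l1 x.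
    rewrite -(ler_pM2r D_gt0); apply: (le_trans epsD).
    rewrite -mulrA ler_pM2l //; apply: le_trans (vb x); exact: ltW.
  lra.
split.
  move=> x; case: (lerP (v x - a) 0) => h; first by rewrite mulr0 mulr0.
  
  have ax : a < v x by rewrite -subr_gt0.
  have := key x ax; have := l12 x; have := vl x.
  have := ler_wpM2l (ltW c0) (vl x).
  have := mulr_ge0 hlam a0; have := mulr_ge0 (ltW c0) (mulr_ge0 hlam a0).
  nra.
split.
  move=> x y; case: (lerP (v x - a) 0) => h.
    rewrite !mulr0 subr0 add0r.
    apply: le_trans (_ : 0 <= _); first by rewrite oppr_le0.
    by apply: mulr_ge0; [exact: l20|exact: d_ge0].
  
  have ax : a < v x by rewrite -subr_gt0.
  have s1 : (1 - del) * (v x - a) - (1 - del) * Num.max (v y - a) 0 <= (1 - del) * (v x - v y).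
    have := wlow y; lra.
  apply: (le_trans s1).
  have s2 : (1 - del) * (v x - v y) <= (1 - del) * ((l1 x - lam * v x) * d x y).
    by rewrite ler_pM2l.
  apply: (le_trans s2); rewrite mulrA; apply: ler_wpM2r; first exact: d_ge0.
  have := key x ax; have := l12 x.
  have := mulr_ge0 (ltW c0) (mulr_ge0 hlam a0).
  nra.
move=> e e0; have [x vx] := vi e e0; exists x.
apply: le_lt_trans vx.
case: (lerP (v x - a) 0) => h; first by rewrite mulr0.
have := v0 x; nra.
Qed.

Section Perron.
Variable l : X -> R.
Hypothesis hl0 : forall x, 0 <= l x.
Hypothesis hllsc : lsc_real d l.
Hypothesis hlinf : forall e, 0 < e -> exists x, l x < e.

Definition SS x := [set v x | v in [set v | sub l v]].
Definition U x := sup (SS x).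

Lemma sub0 : sub l (fun _ => 0).
Proof.
split; first by move=> x t t0; exists 1 => // y _.
split=> //; split; first by move=> x; rewrite mulr0.
split; first by move=> x y; rewrite subrr mulr0 subr0 mulr_ge0 // d_ge0.
by move=> e e0; have [x _] := hlinf e0; exists x.
Qed.

Lemma SS_has_sup x : has_sup (SS x).
Proof.
split; first by exists 0, (fun _ => 0) => //; exact: sub0.
by exists (l x * D) => _ [v sv <-]; exact: sub_bound sv x.
Qed.

Lemma U_ub v x : sub l v -> v x <= U x.
Proof. by move=> sv; apply: (sup_upper_bound (SS_has_sup x)); exists v. Qed.

Lemma U_bound x : U x <= l x * D.
Proof.
apply: ge_sup; first by exists 0, (fun _ => 0) => //; exact: sub0.
by move=> _ [v sv <-]; exact: sub_bound sv x.
Qed.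

Lemma U_adh x e : 0 < e -> exists2 v, sub l v & U x - e < v x.
Proof. by move=> e0; have [_ [v sv <-] ?] := sup_adherent e0 (SS_has_sup x); exists v. Qed.

Lemma U_sub : sub l U.
Proof.
have U0 x : 0 <= U x by exact: (U_ub x sub0).
split.
  move=> x t tU; have [v sv vx] := U_adh x (ltac:(by rewrite subr_gt0) : 0 < U x - t).
  have tv : t < v x by move: vx; rewrite opprB addrCA subrr addr0.
  have [del del0 Hd] := sv.1 x t tv.
  by exists del => // y /Hd ty; apply: lt_le_trans ty (U_ub y sv).
split=> //; split.
  move=> x; apply: (@gap_le _ _ _ lam hlam) => e e0.
  have [v [_ [_ [vl _]]] vx] := U_adh x e0.
  have := vl x; have := ler_wpM2l hlam (ltW vx); nra.
split.
  move=> x y; apply: (@gap_le _ _ _ (lam * d x y + 1)).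
    by have := mulr_ge0 hlam (d_ge0 x y); lra.
  move=> e e0; have [v sv vx] := U_adh x e0.
  have := sv.2.2.2.1 x y; have := U_ub y sv; have := d_ge0 x y => dp.
  have := ler_wpM2l (mulr_ge0 hlam dp) (ltW vx); nra.
move=> e e0; have [x lx] := hlinf (divr_gt0 e0 D_gt0).
exists x; apply: le_lt_trans (U_bound x) _.
by rewrite -ltr_pdivlMr.
Qed.

Lemma U_super x0 k : 0 <= k -> (forall y, U x0 - U y <= k * d x0 y) ->
  l x0 - lam * U x0 <= k.
Proof.
move=> k0 H; rewrite leNgt; apply/negP => kg.
have [Usc [U0 [Ul [Us Ui]]]] := U_sub.
set g := l x0 - lam * U x0 in kg.
pose eta := (g - k) / 3.
have eta0 : 0 < eta by rewrite divr_gt0 // subr_gt0.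
have geta : g - k = 3 * eta by rewrite /eta mulrC divfK.
have lt0 : l x0 - eta < l x0 by rewrite ltrBlDr ltrDl.
have [rho0 rho00 Hrho0] := hllsc lt0.
pose rho := Num.min rho0 (1 / (lam + 1)).
have lam1 : 0 < lam + 1 by apply: (lt_le_trans ltr01); rewrite lerDr.
have rho0p : 0 < rho by rewrite lt_min rho00 divr_gt0.
have rho_le : rho <= rho0 by rewrite ge_min lexx.
have rho_lam : lam * rho <= 1.
  have : rho <= 1 / (lam + 1) by rewrite ge_min lexx orbT.
  rewrite ler_pdivlMr // => h; nra.
pose t := eta * rho.
have t0 : 0 < t by rewrite mulr_gt0.
pose kk := k + eta.
pose phi y := U x0 + t - kk * d x0 y.
have bump y : U y < phi y -> d x0 y < rho.
  move=> h; have := H y; have := d_ge0 x0 y; rewrite /phi /kk /t in h.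
  move=> dp h2.
  have : eta * d x0 y < eta * rho by lra.
  by rewrite ltr_pM2l.
have key y : U y < phi y -> lam * phi y + kk <= l y.
  move=> /bump h; have ly := Hrho0 y (lt_le_trans h rho_le).
  have hp : phi y <= U x0 + t.
    by rewrite /phi lerBlDr lerDl mulr_ge0 ?d_ge0 // /kk addr_ge0 // ltW.
  have := ler_wpM2l hlam hp.
  have : lam * t <= eta by rewrite /t mulrCA ger_pMr.
  rewrite /kk; move: geta; rewrite /g; lra.
pose V y := Num.max (U y) (phi y).
have VU y : U y <= V y by rewrite le_max lexx.
have Vphi y : phi y <= V y by rewrite le_max lexx orbT.
have kk0 : 0 < kk by rewrite /kk; lra.
have phiL y z : phi y - phi z <= kk * d y z.
  rewrite /phi; have := d_tri x0 y z; have := d_sym x0 y; nra.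
have sV : sub l V.
  split.
    move=> y t'; rewrite lt_max => /orP[h|h].
      have [del del0 Hd] := Usc y t' h.
      by exists del => // z /Hd tz; apply: lt_le_trans tz (VU z).
    exists ((phi y - t') / kk); first by rewrite divr_gt0 // subr_gt0.
    move=> z; rewrite ltr_pdivlMr // => hz.
    apply: lt_le_trans (Vphi z); have := phiL y z; rewrite (mulrC (d y z)) in hz.
    lra.
  split; first by move=> y; apply: le_trans (U0 y) (VU y).
  split.
    move=> y; case: (lerP (phi y) (U y)) => h; first by rewrite /V max_l.
    rewrite /V max_r ?ltW //; have := key y h; lra.
  split.
    move=> y z; case: (lerP (phi y) (U y)) => h.
      rewrite /V (max_l h) -/(V z); have := Us y z; have := VU z; lra.
    rewrite /V (max_r (ltW h)) -/(V z).
    have := key y h; have := phiL y z; have := Vphi z; have := d_ge0 y z => dp.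
    move=> h1 h2 h3; have : kk * d y z <= (l y - lam * phi y) * d y z.
      by apply: ler_wpM2r => //; lra.
    lra.
  move=> e e0.
  have h1 : 0 < l x0 - eta.
    have := mulr_ge0 hlam (U0 x0); move: geta; rewrite /g; lra.
  have e'0 : 0 < Num.min (l x0 - eta) (e / D) by rewrite lt_min h1 divr_gt0.
  have [y ly] := hlinf e'0; move: ly; rewrite lt_min => /andP[ly1 ly2].
  exists y; case: (lerP (phi y) (U y)) => h.
    rewrite /V (max_l h); apply: le_lt_trans (U_bound y) _.
    by rewrite -ltr_pdivlMr.
  have := Hrho0 y (lt_le_trans (bump y h) rho_le); lra.
have := U_ub x0 sV; have := Vphi x0; rewrite /phi d_xx mulr0 subr0; lra.
Qed.

Lemma perron_dom u : is_perron d lam l u -> forall w, sub l w -> forall x, w x <= fine (u x).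
Proof.
move=> [us umax] w sw x.
have Usol := super_sol U_sub U_super.
have h := umax _ Usol x.
rewrite (sol_fin us) /= lee_fin in h.
exact: le_trans (U_ub x sw) h.
Qed.

End Perron.
End Main.

Unset Implicit Arguments. Set Strict Implicit.
Lemma inf_small (R : realType) (X : Type) (f : X -> R) :
  ereal_inf (range (fun x => (f x)%:E)) = 0%E -> forall e, 0 < e -> exists x, f x < e.
Proof.
move=> h e e0.
have : (ereal_inf (range (fun x => (f x)%:E)) < e%:E)%E by rewrite h lte_fin.
by move=> /ereal_inf_lt [_ [x _ <-]]; rewrite lte_fin => h'; exists x.
Qed.

Theorem theorem5p4 (R : realType) (X : Type) (d : X -> X -> R)
  (lam : R) (l : X -> R) (ln : nat -> X -> R)
  (u : X -> \bar R) (un : nat -> X -> \bar R) :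
  is_metric d -> bounded_metric d -> 0 <= lam ->
  (forall x, 0 <= l x) -> (forall n x, 0 <= ln n x) ->
  lsc_real d l -> (forall n, lsc_real d (ln n)) ->
  ereal_inf (range (fun x => (l x)%:E)) = 0%E ->
  (forall n, ereal_inf (range (fun x => (ln n x)%:E)) = 0%E) ->
  (exists M : R, forall x, l x <= M) ->
  is_perron d lam l u -> (forall n, is_perron d lam (ln n) (un n)) ->
  unif_conv_real ln l -> unif_conv_ext un u.
Proof.
move=> hd [Db hDb] hlam hl0 hln0 hllsc hlnlsc hlinf hlninf [M hM] hu hun hconv.
pose D := Num.max Db 1.
have D0 : 0 < D by rewrite lt_max ltr01 orbT.
have hD x y : d x y <= D by apply: le_trans (hDb x y) _; rewrite le_max lexx.
have linf := @inf_small _ _ _ hlinf.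
have lninf n := @inf_small _ _ _ (hlninf n).
pose v x := fine (u x).
pose vn n x := fine (un n x).
have ufin x : u x = (v x)%:E := congr1 (fun f => f x) (sol_fin hlam hu.1).
have unfin n x : un n x = (vn n x)%:E := congr1 (fun f => f x) (sol_fin hlam (hun n).1).
have sv : sub d lam l v.
  apply: (@sol_sub _ _ _ lam hd l v); rewrite /v -(sol_fin hlam hu.1); exact: hu.1.
have svn n : sub d lam (ln n) (vn n).
  apply: (@sol_sub _ _ _ lam hd (ln n) (vn n)); rewrite /vn -(sol_fin hlam (hun n).1); exact: (hun n).1.
have PD := perron_dom hd hlam D0 hD hl0 hllsc linf hu.
have PDn n := perron_dom hd hlam D0 hD (hln0 n) (hlnlsc n) (lninf n) (hun n).
pose K := (Num.max M 0 + 1) * D.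
have M0 : 0 <= Num.max M 0 by rewrite le_max lexx orbT.
have MM : M <= Num.max M 0 by rewrite le_max lexx.
have K0 : 0 < K by rewrite mulr_gt0 // ltr_wpDl.
move=> e e0.
pose del := Num.min (e / (4 * K)) (1 / 2).
have del0 : 0 < del by rewrite lt_min !divr_gt0 // mulr_gt0.
have del1 : del < 1 by rewrite gt_min; apply/orP; right; lra.
have delK : del * K <= e / 4.
  have : del <= e / (4 * K) by rewrite ge_min lexx.
  rewrite ler_pdivlMr; last by rewrite mulr_gt0. move=> h.
  rewrite ler_pdivlMr //; apply: le_trans h; rewrite le_eqVlt; apply/orP; left; apply/eqP; ring.
pose a := e / 4.
have a0 : 0 <= a by rewrite divr_ge0 // ltW.
pose eps := Num.min 1 (del * a / D).
have eps0 : 0 < eps by rewrite lt_min ltr01 /= divr_gt0 // mulr_gt0 // divr_gt0.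
have eps1 : eps <= 1 by rewrite ge_min lexx.
have epsD : eps * D <= del * a.
  by rewrite -ler_pdivlMr // ge_min lexx orbT.
have [N HN] := hconv eps eps0.
exists N => n nN x.
have hx y : l y - eps <= ln n y /\ ln n y - eps <= l y.
  by have := HN n nN y; rewrite ltr_norml => /andP[h1 h2]; split; lra.
have w1 := trunc hd hlam D0 hD sv (hln0 n) (fun y => (hx y).1) del0 del1 a0 epsD.
have w2 := trunc hd hlam D0 hD (svn n) hl0 (fun y => (hx y).2) del0 del1 a0 epsD.
have i1 := PDn n _ w1 x.
have i2 := PD _ w2 x.
rewrite -/(vn n x) in i1; rewrite -/(v x) in i2.
have m1 : (1 - del) * (v x - a) <= (1 - del) * Num.max (v x - a) 0.
  by rewrite ler_pM2l ?subr_gt0 // le_max lexx.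
have m2 : (1 - del) * (vn n x - a) <= (1 - del) * Num.max (vn n x - a) 0.
  by rewrite ler_pM2l ?subr_gt0 // le_max lexx.
have b1 : v x <= K.
  apply: le_trans (sub_bound hd hlam hD sv x) _.
  rewrite ler_pM2r //; have := hM x; lra.
have b2 : vn n x <= K.
  apply: le_trans (sub_bound hd hlam hD (svn n) x) _.
  rewrite ler_pM2r //; have := hM x; have := (hx x).1; have := (hx x).2; lra.
have c1 : del * v x <= del * K by rewrite ler_pM2l.
have c2 : del * vn n x <= del * K by rewrite ler_pM2l.
have c3 : (1 - del) * a <= a by rewrite mulrBl mul1r; have := mulr_ge0 (ltW del0) a0; lra.
have v0 := (sv.2.1 x).
have vn0 := ((svn n).2.1 x).
rewrite unfin ufin -EFinB abse_EFin lte_fin ltr_norml.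
have e1 : (1 - del) * (v x - a) = v x - del * v x - (1 - del) * a by ring.
have e2 : (1 - del) * (vn n x - a) = vn n x - del * vn n x - (1 - del) * a by ring.
rewrite e1 in m1; rewrite e2 in m2.
apply/andP; split; rewrite /a in c3 m1 m2 *; lra.
Qed.
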